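(* Let $V_1,V_2$ be irreducible $R$-modules having the same infinitesimal character (i.e., there is an algebra homomorphism $\xi:Z(R)\to\mathbb{C}$ such that each $z\in Z(R)$ acts on both $V_1$ and $V_2$ by the scalar $\xi(z)$). If $V_1$ and $V_2$ each contain a nonzero Whittaker vector of type $\eta$, then in each $V_i$ the Whittaker vectors of type $\eta$ are unique up to scalar multiples, and $V_1\cong V_2$ as $R$-modules.
   Context: Let $f\in\mathbb{C}[H]$ be a polynomial. $R=R(f)$ is the associative $\mathbb{C}$-algebra generated by $E,F,H$ with relations $EF-FE=f(H)$, $HE-EH=E$, $HF-FH=-F$. Let $R(E)=\mathbb{C}[E]$; $Z(R)$ is the center of $R$. Fix an algebra homomorphism $\eta:R(E)\to\mathbb{C}$ with $\eta(E)\neq 0$. A vector $w$ of an $R$-module is a Whittaker vector of type $\eta$ if $Ew=\eta(E)w$. *)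

(* Defs.v *)
(* C := R[i] for R : realType, i.e. the complex numbers. *)
From HB Require Import structures.
From mathcomp Require Import all_boot all_order all_algebra.
From mathcomp Require Import complex.
From mathcomp Require Import reals.
Set Implicit Arguments. Unset Strict Implicit. Unset Printing Implicit Defensive.
Import Order.TTheory GRing.Theory Num.Theory.
Local Open Scope ring_scope.

Section Defs.
Variable C : fieldType.

Definition peval (V : lmodType C) (f : {poly C}) (H : V -> V) (v : V) : V :=
  \sum_(i < size f) f`_i *: iter i H v.

Definition is_Rmodule (f : {poly C}) (V : lmodType C)
    (E F H : {linear V -> V}) : Prop :=
  [/\ forall v, E (F v) - F (E v) = peval f H v,
      forall v, H (E v) - E (H v) = E v &
      forall v, H (F v) - F (H v) = - F v].

(* Elements of the algebra R(f), written as noncommutative polynomial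
   expressions in the generators E, F, H with coefficients in C. *)
Inductive Rterm : Type :=
  | tE | tF | tH
  | tC of C
  | tAdd of Rterm & Rterm
  | tMul of Rterm & Rterm.

Fixpoint act (V : lmodType C) (E F H : V -> V) (t : Rterm) (v : V) : V :=
  match t with
  | tE => E v | tF => F v | tH => H v
  | tC c => c *: v
  | tAdd a b => act E F H a v + act E F H b v
  | tMul a b => act E F H a (act E F H b v)
  end.

(* Since R acts faithfully on itself, this is expressed as: in every
   R(f)-module, the action of z commutes with those of E, F, H. *)
Definition central (f : {poly C}) (z : Rterm) : Prop :=
  forall (V : lmodType C) (E F H : {linear V -> V}), is_Rmodule f E F H ->
    forall v, act E F H z (E v) = E (act E F H z v) /\
              act E F H z (F v) = F (act E F H z v) /\
              act E F H z (H v) = H (act E F H z v).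

Definition center_char (f : {poly C}) (xi : Rterm -> C) : Prop :=
  (forall c, xi (tC c) = c) /\
  (forall a b, central f a -> central f b -> xi (tAdd a b) = xi a + xi b) /\
  (forall a b, central f a -> central f b -> xi (tMul a b) = xi a * xi b).

Definition irreducible (V : lmodType C) (E F H : V -> V) : Prop :=
  (exists v : V, v != 0) /\
  forall S : V -> Prop,
    S 0 -> (forall u w, S u -> S w -> S (u + w)) ->
    (forall (c : C) u, S u -> S (c *: u)) ->
    (forall u, S u -> S (E u) /\ S (F u) /\ S (H u)) ->
    (forall u, S u -> u = 0) \/ (forall u, S u).

(* w is a Whittaker vector of type eta, where eta : C[E] -> C is
   determined by the scalar etaE = eta(E) *)
Definition whittaker (V : lmodType C) (E : V -> V) (etaE : C) (w : V) :=
  E w = etaE *: w.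

Definition Rmod_iso (V1 V2 : lmodType C) (E1 F1 H1 : V1 -> V1)
    (E2 F2 H2 : V2 -> V2) : Prop :=
  exists phi : {linear V1 -> V2}, bijective phi /\
    forall v, phi (E1 v) = E2 (phi v) /\ phi (F1 v) = F2 (phi v) /\
              phi (H1 v) = H2 (phi v).
End Defs.

(* Main.v *)
Require Import Defs.
From HB Require Import structures.
From mathcomp Require Import all_boot all_order all_algebra.
From mathcomp Require Import complex.
From mathcomp Require Import reals.
Import Order.TTheory GRing.Theory Num.Theory.
Local Open Scope ring_scope.
Set Implicit Arguments. Unset Strict Implicit.

Section Pev.
Variable C : numFieldType.
Variable V : lmodType C.
Variable H : {linear V -> V}.

Lemma iterH0 i : iter i H 0 = 0.
Proof. by elim: i => //= i ->; rewrite linear0. Qed.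

Lemma iterH_lin i (a : C) u w : iter i H (a *: u + w) = a *: iter i H u + iter i H w.
Proof. by elim: i => //= i ->; rewrite linearD linearZ. Qed.

Lemma peval_sum (p : {poly C}) n v : (size p <= n)%N ->
  peval p H v = \sum_(i < n) p`_i *: iter i H v.
Proof.
move=> le; rewrite /peval -(subnKC le) big_split_ord /=.
rewrite [X in _ + X]big1 ?addr0 // => i _.
by rewrite nth_default ?scale0r // leq_addr.
Qed.
Arguments peval_sum : clear implicits.

Lemma pev0 v : peval 0 H v = 0.
Proof. by rewrite /peval size_poly0 big_ord0. Qed.

Lemma pevD p q v : peval (p + q) H v = peval p H v + peval q H v.
Proof.
pose n := (size p + size q)%N.
have h1 : (size (p + q)%R <= n)%N.
  by rewrite (leq_trans (size_add _ _)) // geq_max leq_addr leq_addl.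
rewrite (peval_sum _ _ _ h1) (peval_sum p n) ?leq_addr // (peval_sum q n) ?leq_addl //.
by rewrite -big_split /=; apply: eq_bigr => i _; rewrite coefD scalerDl.
Qed.

Lemma pevZ (c : C) p v : peval (c *: p) H v = c *: peval p H v.
Proof.
rewrite (peval_sum _ (size p)) ?size_scale_leq // /peval scaler_sumr.
by apply: eq_bigr => i _; rewrite coefZ scalerA.
Qed.

Lemma pevN p v : peval (- p) H v = - peval p H v.
Proof. by rewrite -(scaleN1r p) pevZ scaleN1r. Qed.

Lemma pevB p q v : peval (p - q) H v = peval p H v - peval q H v.
Proof. by rewrite pevD pevN. Qed.

Lemma pevC c v : peval c%:P H v = c *: v.
Proof.
rewrite (peval_sum _ 1) ?size_polyC ?leq_b1 // big_ord1 coefC /=.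
by [].
Qed.

Lemma pev1 v : peval 1 H v = v.
Proof. by rewrite pevC scale1r. Qed.

Lemma pev_mulX p v : peval (p * 'X) H v = peval p H (H v).
Proof.
have hs : (size (p * 'X)%R <= (size p).+1)%N.
  by rewrite (leq_trans (size_mul_leq _ _)) // size_polyX addn2.
rewrite (peval_sum _ _ _ hs) big_ord_recl coefMX eqxx scale0r add0r /peval.
by apply: eq_bigr => i _; rewrite lift0 coefMX iterSr.
Qed.

Lemma pevX v : peval 'X H v = H v.
Proof. by rewrite -[X in peval X]mul1r pev_mulX pev1. Qed.

Lemma pev_H_comm p v : peval p H (H v) = H (peval p H v).
Proof.
rewrite /peval linear_sum; apply: eq_bigr => i _.
by rewrite linearZ /= -iterS iterSr.
Qed.

Lemma pev_linv p (a : C) u w : peval p H (a *: u + w) = a *: peval p H u + peval p H w.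
Proof.
rewrite /peval scaler_sumr -big_split; apply: eq_bigr => i _ /=.
by rewrite iterH_lin scalerDr !scalerA mulrC.
Qed.

Lemma pev_scalev p (a : C) u : peval p H (a *: u) = a *: peval p H u.
Proof.
have := pev_linv p a u 0; rewrite addr0 => ->.
have -> : peval p H 0 = 0 by rewrite /peval big1 // => i _; rewrite iterH0 scaler0.
by rewrite addr0.
Qed.

Lemma pevM p q v : peval (p * q) H v = peval p H (peval q H v).
Proof.
elim/poly_ind: p v => [|p c IH] v; first by rewrite mul0r !pev0.
rewrite mulrDl pevD -mulrA (mulrC 'X) mulrA pev_mulX IH pevD pev_mulX.
by rewrite mul_polyC pevZ pevC pev_H_comm.
Qed.

Lemma pev_shift (A : {linear V -> V}) (a : C) :
  (forall v, A (H v) = H (A v) + a *: A v) ->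
  forall p v, A (peval p H v) = peval (p \Po ('X + a%:P)) H (A v).
Proof.
move=> hA; elim/poly_ind => [|p c IH] v.
  by rewrite comp_poly0 !pev0 linear0.
rewrite pevD pev_mulX pevC linearD linearZ IH hA.
rewrite comp_polyD comp_polyM comp_polyX comp_polyC pevD pevC pevM pevD pevC pevX.
by [].
Qed.
End Pev.

Section Polys.
Variable C : numFieldType.
Implicit Types p q : {poly C}.

Lemma shift_const p (a : C) : a != 0 ->
  p \Po ('X + a%:P) = p -> p = (p.[0])%:P.
Proof.
move=> a0 hp.
have hk : forall k : nat, p.[k%:R * a] = p.[0].
  elim=> [|k IH]; first by rewrite mul0r.
  by rewrite -IH -{2}hp horner_comp !hornerE mulrSr mulrDl mul1r.
apply/eqP; rewrite -subr_eq0; apply/negPn/negP => rn0.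
suff: (size (mkseq (fun k : nat => (k%:R * a)%R) (size (p - (p.[0])%:P)%R)) < size (p - (p.[0])%:P)%R)%N.
  by rewrite size_mkseq ltnn.
apply: (max_poly_roots rn0).
  apply/allP => x /mapP [k _ ->].
  by rewrite /root hornerD hornerN hornerC hk subrr.
rewrite map_inj_uniq ?iota_uniq // => k1 k2 /(mulIf a0)/eqP.
by rewrite eqr_nat => /eqP.
Qed.

Definition Delta (a : C) p := p - (p \Po ('X + a%:P)).

Lemma DeltaD a p q : Delta a (p + q) = Delta a p + Delta a q.
Proof. rewrite /Delta comp_polyD opprD. by rewrite addrACA. Qed.

Lemma DeltaZ a (c : C) p : Delta a (c *: p) = c *: Delta a p.
Proof. by rewrite /Delta comp_polyZ scalerBr. Qed.

Lemma Delta_size a p : (size (Delta a p) <= (size p).-1)%N.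
Proof.
have [->|p0] := eqVneq p 0; first by rewrite /Delta comp_poly0 subrr size_poly0.
have hs := size_comp_poly2 p (size_XaddC a).
have hl : lead_coef (p \Po ('X + a%:P)) = lead_coef p.
  by rewrite lead_coef_comp ?size_XaddC // lead_coefXaddC expr1n mulr1.
apply/leq_sizeP => j hj; rewrite /Delta coefB.
have [->|hj'] := eqVneq j (size p).-1.
  by move: hl; rewrite /lead_coef hs => ->; rewrite subrr.
have hjs : (size p <= j)%N.
  have : (0 < size p)%N by rewrite size_poly_gt0.
  by move: hj hj'; case: (size p) => // n /=; rewrite leq_eqVlt eq_sym => /orP [->|].
by rewrite !nth_default ?subrr // hs.
Qed.

Fixpoint Pk (k : nat) : {poly C} :=
  if k is k'.+1 then ('X + (k'.+1)%:R%:P) * Pk k' else 1.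

Lemma Pk_monic k : Pk k \is monic.
Proof. by elim: k => [|k IH] /=; rewrite ?monic1 // monicMl ?monicXaddC. Qed.

Lemma Pk_size k : size (Pk k) = k.+1.
Proof.
elim: k => [|k IH] /=; first by rewrite size_poly1.
rewrite size_monicM ?monicXaddC ?size_XaddC ?IH //.
by rewrite -size_poly_eq0 IH.
Qed.

Lemma Pk_shift k : Pk k.+1 \Po ('X + (-1)%:P) = 'X * Pk k.
Proof.
elim: k => [|k IH].
  rewrite /= !mulr1 comp_polyD comp_polyX comp_polyC.
  by rewrite -addrA -polyCD addNr addr0.
rewrite [Pk k.+2]/= comp_polyM IH comp_polyD comp_polyX comp_polyC.
rewrite -addrA -polyCD [Pk k.+1]/= mulrCA; congr (_ * (_ * _)).
by rewrite [(k.+2)%:R]mulrS addKr.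
Qed.

Lemma Pk_Delta k : Delta (-1) (Pk k.+1) = (k.+1)%:R *: Pk k.
Proof.
rewrite /Delta Pk_shift [Pk k.+1]/= mulrDl addrAC subrr add0r.
by rewrite mul_polyC.
Qed.

Lemma Delta_surj f : exists u, Delta (-1) u = f.
Proof.
move: {2}(size f) (leqnn (size f)) => n; elim: n f => [|n IH] f hs.
  exists 0; move: hs; rewrite leqn0 size_poly_eq0 => /eqP ->.
  by rewrite /Delta comp_poly0 subrr.
have [hs'|hn] := boolP (size f <= n)%N; first exact: IH.
have sf : size f = n.+1 by apply/eqP; rewrite eqn_leq hs ltnNge hn.
pose lc := lead_coef f.
have hf' : (size (f - lc *: Pk n)%R <= n)%N.
  apply/leq_sizeP => j hj; rewrite coefB coefZ.
  have [->|hj'] := eqVneq j n.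
    have : (Pk n)`_n = 1.
      by move: (Pk_monic n); rewrite monicE /lead_coef Pk_size => /eqP.
    by move=> ->; rewrite mulr1 /lc /lead_coef sf subrr.
  have hjs : (n < j)%N by rewrite ltn_neqAle eq_sym hj' hj.
  by rewrite !nth_default ?mulr0 ?subrr // ?Pk_size ?sf.
have [u' hu'] := IH _ hf'.
exists (u' + (lc / (n.+1)%:R) *: Pk n.+1).
rewrite DeltaD DeltaZ Pk_Delta hu' scalerA mulfVK ?subrK //.
by rewrite pnatr_eq0.
Qed.
End Polys.

Section Center.
Variable C : numFieldType.

Fixpoint hterm (s : seq C) : Rterm C :=
  if s is c :: s' then tAdd (tC c) (tMul (hterm s') (@tH C)) else tC 0.

Lemma act_hterm (V : lmodType C) (E F H : {linear V -> V}) (p : {poly C}) v :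
  act E F H (hterm p) v = peval p H v.
Proof.
rewrite /peval; elim: (polyseq p) v => [|c s IH] v /=.
  by rewrite big_ord0 scale0r.
rewrite IH big_ord_recl /=; congr (_ + _) => //.
by apply: eq_bigr => i _; rewrite -iterS iterSr.
Qed.

Definition Omega (u : {poly C}) : Rterm C := tAdd (tMul (@tF C) (@tE C)) (hterm u).

Lemma act_Omega (V : lmodType C) (E F H : {linear V -> V}) u v :
  act E F H (Omega u) v = F (E v) + peval u H v.
Proof. by rewrite /= act_hterm. Qed.

Lemma Omega_central (f u : {poly C}) : Delta (-1) u = f -> central f (Omega u).
Proof.
move=> hu V E F H [hEF hHE hHF] v.
have hE : forall v, E (H v) = H (E v) + (-1) *: E v.
  move=> x; move/eqP: (hHE x); rewrite subr_eq => /eqP h.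
  by rewrite scaleN1r h addrAC subrr add0r.
have hF : forall v, F (H v) = H (F v) + 1 *: F v.
  move=> x; move/eqP: (hHF x); rewrite subr_eq => /eqP h.
  by rewrite scale1r h addrAC addNr add0r.
have hEF' : forall v, E (F v) = F (E v) + peval f H v.
  move=> x; move/eqP: (hEF x); rewrite subr_eq => /eqP h.
  by rewrite h addrC.
rewrite !act_Omega; split; [|split].
- rewrite linearD hEF' (pev_shift hE) -addrA; congr (_ + _).
  by rewrite -pevD -hu /Delta subrK.
- rewrite linearD hEF' linearD (pev_shift hF) (pev_shift hF) -!addrA; congr (_ + _).
  rewrite -!pevD; congr (peval _ H (F v)).
  have : (Delta (-1) u) \Po ('X + 1%:P) = f \Po ('X + 1%:P) by rewrite hu.
  rewrite /Delta comp_polyB -comp_polyA comp_polyD comp_polyX comp_polyC.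
  rewrite -addrA -polyCD subrr addr0 comp_polyXr => <-.
  by rewrite subrK.
- rewrite linearD pev_H_comm; congr (_ + _).
  have h1 : H (F (E v)) = F (H (E v)) - F (E v).
    by rewrite hF scale1r addrK.
  by rewrite h1 hE linearD linearZ /= scaleN1r.
Qed.
End Center.

Section Module.
Variable C : numFieldType.
Variables (f : {poly C}) (V : lmodType C) (E F H : {linear V -> V}).
Hypothesis hR : is_Rmodule f E F H.
Hypothesis hirr : irreducible E F H.
Variables (eta : C) (u : {poly C}) (xi0 : C) (w : V).
Hypothesis eta0 : eta != 0.
Hypothesis hOm : forall v, F (E v) + peval u H v = xi0 *: v.
Hypothesis w0 : w != 0.
Hypothesis hw : E w = eta *: w.

Lemma m1 : (-1 : C) != 0. Proof. by rewrite oppr_eq0 oner_eq0. Qed.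

Definition gF := eta^-1 *: (xi0%:P - u).

Lemma hE_ v : E (H v) = H (E v) + (-1) *: E v.
Proof.
case: hR => _ hHE _; move/eqP: (hHE v); rewrite subr_eq => /eqP h.
by rewrite scaleN1r h addrAC subrr add0r.
Qed.

Lemma hF_ v : F (H v) = H (F v) + 1 *: F v.
Proof.
case: hR => _ _ hHF; move/eqP: (hHF v); rewrite subr_eq => /eqP h.
by rewrite scale1r h addrAC addNr add0r.
Qed.

Lemma Fw : F w = peval gF H w.
Proof.
rewrite /gF pevZ pevB pevC -(hOm w) hw linearZ /= addrK scalerA mulVf //.
by rewrite scale1r.
Qed.

Lemma Ep p : E (peval p H w) = peval (eta *: (p \Po ('X + (-1)%:P))) H w.
Proof. by rewrite (pev_shift hE_) hw pev_scalev pevZ. Qed.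

Lemma Fp p : F (peval p H w) = peval ((p \Po ('X + 1%:P)) * gF) H w.
Proof. by rewrite (pev_shift hF_) Fw pevM. Qed.

Lemma Hp p : H (peval p H w) = peval ('X * p) H w.
Proof. by rewrite mulrC pev_mulX pev_H_comm. Qed.

Lemma span v : exists p, v = peval p H w.
Proof.
case: hirr => _ /(_ (fun v => exists p, v = peval p H w)) [].
- by exists 0; rewrite pev0.
- by move=> x y [p ->] [q ->]; exists (p + q); rewrite pevD.
- by move=> c x [p ->]; exists (c *: p); rewrite pevZ.
- move=> x [p ->]; split; [|split].
  + by eexists; apply: Ep.
  + by eexists; apply: Fp.
  + by eexists; apply: Hp.
- by move=> /(_ w) h; case/eqP: w0; apply: h; exists 1; rewrite pev1.
- by apply.
Qed.

Lemma free q : peval q H w = 0 -> q = 0.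
Proof.
move: {2}(size q) (leqnn (size q)) => n; elim: n q => [|n IH] q hs hq.
  by apply/eqP; rewrite -size_poly_eq0 -leqn0.
have hd : peval (Delta (-1) q) H w = 0.
  have := congr1 E hq; rewrite Ep linear0 pevZ => /eqP.
  rewrite scaler_eq0 (negbTE eta0) /= => /eqP h.
  by rewrite /Delta pevB hq h subrr.
have hsz : (size (Delta (-1) q) <= n)%N.
  by rewrite (leq_trans (Delta_size _ _)) //; case: (size q) hs.
have := IH _ hsz hd => /eqP; rewrite subr_eq0 => /eqP hc.
have hc' := shift_const m1 (esym hc).
move: hq; rewrite hc' pevC => /eqP; rewrite scaler_eq0 (negbTE w0) orbF => /eqP ->.
by [].
Qed.

Lemma whit_unique w' : E w' = eta *: w' -> exists c, w' = c *: w.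
Proof.
have [p ->] := span w'; rewrite Ep => /eqP; rewrite -pevZ -subr_eq0 -pevB.
rewrite -scalerBr => /eqP /free /eqP; rewrite scaler_eq0 (negbTE eta0) /= subr_eq0.
move=> /eqP hc; have hc' := shift_const m1 hc.
by exists p.[0]; rewrite {1}hc' pevC.
Qed.
End Module.

Theorem mainTheorem8 (R : realType) (f : {poly R[i]}) (etaE : R[i])
  (V1 : lmodType R[i]) (E1 F1 H1 : {linear V1 -> V1})
  (V2 : lmodType R[i]) (E2 F2 H2 : {linear V2 -> V2}) :
  etaE != 0 ->
  is_Rmodule f E1 F1 H1 -> is_Rmodule f E2 F2 H2 ->
  irreducible E1 F1 H1 -> irreducible E2 F2 H2 ->
  (exists xi : Rterm R[i] -> R[i], center_char f xi /\
     forall z, central f z ->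
       (forall v, act E1 F1 H1 z v = xi z *: v) /\
       (forall v, act E2 F2 H2 z v = xi z *: v)) ->
  (exists w1 : V1, w1 != 0 /\ whittaker E1 etaE w1) ->
  (exists w2 : V2, w2 != 0 /\ whittaker E2 etaE w2) ->
  [/\ (forall w w' : V1, w != 0 -> whittaker E1 etaE w -> whittaker E1 etaE w' ->
         exists c : R[i], w' = c *: w),
      (forall w w' : V2, w != 0 -> whittaker E2 etaE w -> whittaker E2 etaE w' ->
         exists c : R[i], w' = c *: w) &
      Rmod_iso E1 F1 H1 E2 F2 H2].
Proof.
move=> eta0 hR1 hR2 hi1 hi2 [xi [_ hxi]] [w1 [w10 hw1]] [w2 [w20 hw2]].
have [u hu] := Delta_surj f.
have [h1 h2] := hxi _ (Omega_central hu).
have hO1 : forall v, F1 (E1 v) + peval u H1 v = xi (Omega u) *: v.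
  by move=> v; rewrite -act_Omega h1.
have hO2 : forall v, F2 (E2 v) + peval u H2 v = xi (Omega u) *: v.
  by move=> v; rewrite -act_Omega h2.
split.
- by move=> w w' w0 hw hw'; exact: (whit_unique hR1 hi1 eta0 hO1 w0 hw hw').
- by move=> w w' w0 hw hw'; exact: (whit_unique hR2 hi2 eta0 hO2 w0 hw hw').
have sp1 := span hR1 hi1 eta0 hO1 w10 hw1.
have sp2 := span hR2 hi2 eta0 hO2 w20 hw2.
have fr1 := free hR1 eta0 w10 hw1.
have fr2 := free hR2 eta0 w20 hw2.
have ex1 : forall v : V1, exists p : {poly R[i]}, v == peval p H1 w1.
  by move=> v; have [p ->] := sp1 v; exists p.
have ex2 : forall v : V2, exists p : {poly R[i]}, v == peval p H2 w2.
  by move=> v; have [p ->] := sp2 v; exists p.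
pose phi0 (v : V1) : V2 := peval (xchoose (ex1 v)) H2 w2.
pose psi0 (v : V2) : V1 := peval (xchoose (ex2 v)) H1 w1.
have phiP : forall p, phi0 (peval p H1 w1) = peval p H2 w2.
  move=> p; rewrite /phi0; move: (xchooseP (ex1 (peval p H1 w1))).
  rewrite eq_sym -subr_eq0 -pevB => /eqP /fr1 /eqP; rewrite subr_eq0 => /eqP ->.
  by [].
have psiP : forall p, psi0 (peval p H2 w2) = peval p H1 w1.
  move=> p; rewrite /psi0; move: (xchooseP (ex2 (peval p H2 w2))).
  rewrite eq_sym -subr_eq0 -pevB => /eqP /fr2 /eqP; rewrite subr_eq0 => /eqP ->.
  by [].
have phi_lin : linear phi0.
  move=> a x y; have [p ->] := sp1 x; have [q ->] := sp1 y.
  by rewrite -pevZ -pevD !phiP pevD pevZ.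
pose phi : {linear V1 -> V2} := HB.pack phi0 (GRing.isLinear.Build _ _ _ _ phi0 phi_lin).
exists phi; split.
  exists psi0.
    by move=> v; have [p ->] := sp1 v; rewrite /= phiP psiP.
  by move=> v; have [p ->] := sp2 v; rewrite /= psiP phiP.
move=> v; have [p ->] := sp1 v; rewrite /= phiP.
rewrite (Ep hR1 hw1) (Ep hR2 hw2) (Fp hR1 eta0 hO1 hw1) (Fp hR2 eta0 hO2 hw2).
by rewrite !Hp !phiP.
Qed.
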